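(* The join $\mathsf{BA}\vee\mathsf{SL}$ of $\mathsf{BA}$ and $\mathsf{SL}$ in the lattice of subvarieties of $V(\mathsf{BCA})$ equals $\mathsf{BA}\times\mathsf{SL}$. Here $\mathsf{BA}\times\mathsf{SL}$ is the class of all algebras isomorphic to a direct product $\mathbf{A}_1\times\mathbf{A}_2$ with $\mathbf{A}_1\in\mathsf{BA}$ and $\mathbf{A}_2\in\mathsf{SL}$.
   Context: $\mathbf{WK}^e$ is the three-element algebra on $\{0,\tfrac12,1\}$ of type $\langle\wedge,\vee,\neg,J_2,0,1\rangle$. Its operations are: - $\neg$ swaps $0,1$ and fixes $\tfrac12$; - $\wedge,\vee$ are Boolean on $\{0,1\}$ and return $\tfrac12$ if some argument is $\tfrac12$; - $J_2(1)=1$ and $J_2(\tfrac12)=J_2(0)=0$. $\mathsf{BCA}=ISP(\mathbf{WK}^e)$ and $V(\mathsf{BCA})=HSP(\mathbf{WK}^e)$. $\mathsf{BA}$ is the subvariety of $V(\mathsf{BCA})$ axiomatised relative to it by $J_2x\approx x$. $\mathsf{SL}$ is the subvariety axiomatised relative to it by $J_2x\approx1$. *)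

(* Defs.v *)
Record alg := Alg {
  car :> Type;
  a_meet : car -> car -> car;
  a_join : car -> car -> car;
  a_neg  : car -> car;
  a_J2   : car -> car;
  a_zero : car;
  a_one  : car
}.

Arguments a_meet {a} _ _.
Arguments a_join {a} _ _.
Arguments a_neg {a} _.
Arguments a_J2 {a} _.
Arguments a_zero {a}.
Arguments a_one {a}.

Definition is_hom (A B : alg) (f : A -> B) : Prop :=
  (forall x y, f (a_meet x y) = a_meet (f x) (f y)) /\
  (forall x y, f (a_join x y) = a_join (f x) (f y)) /\
  (forall x, f (a_neg x) = a_neg (f x)) /\
  (forall x, f (a_J2 x) = a_J2 (f x)) /\
  f a_zero = a_zero /\
  f a_one = a_one.

Definition injective {X Y : Type} (f : X -> Y) : Prop :=
  forall x y, f x = f y -> x = y.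
Definition surjective {X Y : Type} (f : X -> Y) : Prop :=
  forall y, exists x, f x = y.

Definition iso (A B : alg) : Prop :=
  exists f : A -> B, is_hom A B f /\ injective f /\ surjective f.

Definition prod_alg (I : Type) (B : I -> alg) : alg :=
  {| car := forall i, B i;
     a_meet := fun f g i => a_meet (f i) (g i);
     a_join := fun f g i => a_join (f i) (g i);
     a_neg  := fun f i => a_neg (f i);
     a_J2   := fun f i => a_J2 (f i);
     a_zero := fun i => a_zero;
     a_one  := fun i => a_one |}.

Definition prod2 (A1 A2 : alg) : alg :=
  {| car := (A1 * A2)%type;
     a_meet := fun p q => (a_meet (fst p) (fst q), a_meet (snd p) (snd q));
     a_join := fun p q => (a_join (fst p) (fst q), a_join (snd p) (snd q));
     a_neg  := fun p => (a_neg (fst p), a_neg (snd p));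
     a_J2   := fun p => (a_J2 (fst p), a_J2 (snd p));
     a_zero := (a_zero, a_zero);
     a_one  := (a_one, a_one) |}.

Definition aclass := alg -> Prop.

(* HSP(K): homomorphic images of subalgebras of products of members of K.
   A subalgebra is represented by an algebra C with an injective homomorphism
   into the product. *)
Definition HSP (K : aclass) : aclass := fun A =>
  exists (I : Type) (B : I -> alg) (C : alg) (e : C -> prod_alg I B) (h : C -> A),
    (forall i, K (B i)) /\
    is_hom C (prod_alg I B) e /\ injective e /\
    is_hom C A h /\ surjective h.

Definition variety (K : aclass) : Prop :=
  (forall (A B : alg) (h : A -> B), is_hom A B h -> surjective h -> K A -> K B) /\
  (forall (A B : alg) (e : A -> B), is_hom A B e -> injective e -> K B -> K A) /\
  (forall (I : Type) (B : I -> alg), (forall i, K (B i)) -> K (prod_alg I B)).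

Inductive wk3 := W0 | Whalf | W1.

Definition wk_neg (x : wk3) : wk3 :=
  match x with W0 => W1 | Whalf => Whalf | W1 => W0 end.
Definition wk_meet (x y : wk3) : wk3 :=
  match x, y with
  | Whalf, _ | _, Whalf => Whalf
  | W1, W1 => W1
  | _, _ => W0
  end.
Definition wk_join (x y : wk3) : wk3 :=
  match x, y with
  | Whalf, _ | _, Whalf => Whalf
  | W0, W0 => W0
  | _, _ => W1
  end.
Definition wk_J2 (x : wk3) : wk3 :=
  match x with W1 => W1 | _ => W0 end.

Definition WKe : alg :=
  {| car := wk3; a_meet := wk_meet; a_join := wk_join; a_neg := wk_neg;
     a_J2 := wk_J2; a_zero := W0; a_one := W1 |}.

Definition VBCA : aclass := HSP (fun A => A = WKe).

Definition BA : aclass := fun A => VBCA A /\ forall x : A, a_J2 x = x.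
Definition SL : aclass := fun A => VBCA A /\ forall x : A, a_J2 x = a_one.

Definition subvar_join (K1 K2 : aclass) : aclass := fun A =>
  forall K : aclass, variety K -> (forall B, K B -> VBCA B) ->
    (forall B, K1 B -> K B) -> (forall B, K2 B -> K B) -> K A.

Definition prod_class (K1 K2 : aclass) : aclass := fun A =>
  exists A1 A2 : alg, K1 A1 /\ K2 A2 /\ iso A (prod2 A1 A2).

(* Main.v *)
Require Import Defs.
From Stdlib Require Import FunctionalExtensionality ProofIrrelevance IndefiniteDescription.

Inductive term := tV (n:nat) | tM (s u:term) | tJn (s u : term) | tN (s:term) | tJ (s:term) | t0 | t1.

Fixpoint ev (A:alg) (v:nat -> A) (t:term) : A :=
  match t with
  | tV n => v n
  | tM s u => a_meet (ev A v s) (ev A v u)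
  | tJn s u => a_join (ev A v s) (ev A v u)
  | tN s => a_neg (ev A v s)
  | tJ s => a_J2 (ev A v s)
  | t0 => a_zero
  | t1 => a_one
  end.

Lemma hom_ev A B f (H: is_hom A B f) v t : f (ev A v t) = ev B (fun n => f (v n)) t.
Proof.
  destruct H as (Hm&Hj&Hn&HJ&H0&H1).
  induction t; simpl; rewrite ?Hm, ?Hj, ?Hn, ?HJ, ?H0, ?H1; congruence.
Qed.

Lemma prod_ev I B v t i : ev (prod_alg I B) v t i = ev (B i) (fun n => v n i) t.
Proof. induction t; simpl; rewrite ?IHt1, ?IHt2, ?IHt; reflexivity. Qed.

Lemma vbca_id s t : (forall v : nat -> wk3, ev WKe v s = ev WKe v t) ->
  forall A, VBCA A -> forall v : nat -> A, ev A v s = ev A v t.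
Proof.
  intros Hw A [I [B [C [e [h [HB [He [Hinj [Hh Hsurj]]]]]]]]] v.
  pose (w := fun n => proj1_sig (constructive_indefinite_description _ (Hsurj (v n)))).
  assert (vw : v = fun n => h (w n)).
  { apply functional_extensionality; intro n. unfold w.
    destruct (constructive_indefinite_description _ (Hsurj (v n))); simpl; auto. }
  rewrite vw, <- !(hom_ev _ _ _ Hh). f_equal. apply Hinj.
  rewrite !(hom_ev _ _ _ He). apply functional_extensionality_dep; intro i.
  rewrite !prod_ev.
  assert (G : forall X : alg, X = WKe -> forall u : nat -> X, ev X u s = ev X u t)
    by (intros X ->; exact Hw).
  apply G, HB.
Qed.

Definition v3 {A : alg} (x y z : A) (n : nat) : A :=
  match n with 0 => x | 1 => y | _ => z end.

Ltac wk := let v := fresh "v" in intro v; simpl; destruct (v 0); destruct (v 1); reflexivity.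


Section Ids.
Variable A : alg.
Hypothesis H : VBCA A.
Let x0 := tV 0. Let x1 := tV 1.
Lemma I1 (x y : A) : a_J2 (a_meet x y) = a_meet (a_J2 x) (a_J2 y).
Proof. exact (vbca_id (tJ (tM x0 x1)) (tM (tJ x0) (tJ x1)) ltac:(wk) A H (v3 x y x)). Qed.
Lemma I2 (x : A) : a_J2 (a_J2 x) = a_J2 x.
Proof. exact (vbca_id (tJ (tJ x0)) (tJ x0) ltac:(wk) A H (v3 x x x)). Qed.
Lemma I3 : a_J2 (a_zero : A) = a_zero.
Proof. exact (vbca_id (tJ t0) t0 ltac:(wk) A H (v3 a_zero a_zero a_zero)). Qed.
Lemma I4 : a_J2 (a_one : A) = a_one.
Proof. exact (vbca_id (tJ t1) t1 ltac:(wk) A H (v3 a_zero a_zero a_zero)). Qed.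
Lemma I5 (x y : A) : a_meet (a_meet x y) a_zero = a_meet (a_meet x a_zero) (a_meet y a_zero).
Proof. exact (vbca_id (tM (tM x0 x1) t0) (tM (tM x0 t0) (tM x1 t0)) ltac:(wk) A H (v3 x y x)). Qed.
Lemma I6 (x y : A) : a_meet (a_join x y) a_zero = a_join (a_meet x a_zero) (a_meet y a_zero).
Proof. exact (vbca_id (tM (tJn x0 x1) t0) (tJn (tM x0 t0) (tM x1 t0)) ltac:(wk) A H (v3 x y x)). Qed.
Lemma I7 (x : A) : a_meet (a_meet x a_zero) a_zero = a_meet x a_zero.
Proof. exact (vbca_id (tM (tM x0 t0) t0) (tM x0 t0) ltac:(wk) A H (v3 x x x)). Qed.
Lemma I8 : a_meet (a_zero : A) a_zero = a_zero.
Proof. exact (vbca_id (tM t0 t0) t0 ltac:(wk) A H (v3 a_zero a_zero a_zero)). Qed.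
Lemma I9 (x : A) : a_meet (a_neg x) a_zero = a_meet (a_neg (a_meet x a_zero)) a_zero.
Proof. exact (vbca_id (tM (tN x0) t0) (tM (tN (tM x0 t0)) t0) ltac:(wk) A H (v3 x x x)). Qed.
Lemma I10 (x : A) : a_meet (a_J2 x) a_zero = a_zero.
Proof. exact (vbca_id (tM (tJ x0) t0) t0 ltac:(wk) A H (v3 x x x)). Qed.
Lemma I11 : a_meet (a_one : A) a_zero = a_zero.
Proof. exact (vbca_id (tM t1 t0) t0 ltac:(wk) A H (v3 a_zero a_zero a_zero)). Qed.
Lemma I12 (x : A) : x = a_join (a_meet x a_zero) (a_J2 x).
Proof. exact (vbca_id x0 (tJn (tM x0 t0) (tJ x0)) ltac:(wk) A H (v3 x x x)). Qed.
Lemma I13 (x : A) : a_J2 (a_meet x a_zero) = a_zero.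
Proof. exact (vbca_id (tJ (tM x0 t0)) t0 ltac:(wk) A H (v3 x x x)). Qed.
Lemma I14 (x : A) : a_join a_zero x = x.
Proof. exact (vbca_id (tJn t0 x0) x0 ltac:(wk) A H (v3 x x x)). Qed.
Lemma I15 (x : A) : a_join x a_zero = x.
Proof. exact (vbca_id (tJn x0 t0) x0 ltac:(wk) A H (v3 x x x)). Qed.
Lemma I16 (x : A) : a_join x x = x.
Proof. exact (vbca_id (tJn x0 x0) x0 ltac:(wk) A H (v3 x x x)). Qed.
Lemma I17 : a_neg (a_one : A) = a_zero.
Proof. exact (vbca_id (tN t1) t0 ltac:(wk) A H (v3 a_zero a_zero a_zero)). Qed.
End Ids.

Lemma hom_comp A B C f g : is_hom A B f -> is_hom B C g -> is_hom A C (fun x => g (f x)).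
Proof.
  intros (f1&f2&f3&f4&f5&f6) (g1&g2&g3&g4&g5&g6).
  repeat split; intros; rewrite ?f1, ?f2, ?f3, ?f4, ?f5, ?f6, ?g1, ?g2, ?g3, ?g4, ?g5, ?g6; reflexivity.
Qed.

Lemma HSP_H K A B h : HSP K A -> is_hom A B h -> surjective h -> HSP K B.
Proof.
  intros (I&Bs&C&e&h0&HB&He&Hi&Hh&Hs) Hh' Hs'.
  exists I, Bs, C, e, (fun c => h (h0 c)). refine (conj HB (conj He (conj Hi (conj _ _)))).
  - eapply hom_comp; eauto.
  - intro y. destruct (Hs' y) as [a <-]. destruct (Hs a) as [c <-]. eauto.
Qed.

Lemma sig_eq {X : Type} (P : X -> Prop) x y px py : x = y -> exist P x px = exist P y py.
Proof. intros ->. f_equal. apply proof_irrelevance. Qed.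

Section Sub.
Variable A : alg.
Variable P : A -> Prop.
Hypothesis Pm : forall x y, P x -> P y -> P (a_meet x y).
Hypothesis Pj : forall x y, P x -> P y -> P (a_join x y).
Hypothesis Pn : forall x, P x -> P (a_neg x).
Hypothesis PJ : forall x, P x -> P (a_J2 x).
Hypothesis P0 : P a_zero.
Hypothesis P1 : P a_one.
Definition subalg : alg :=
  {| car := {x : A | P x};
     a_meet := fun x y => exist P _ (Pm _ _ (proj2_sig x) (proj2_sig y));
     a_join := fun x y => exist P _ (Pj _ _ (proj2_sig x) (proj2_sig y));
     a_neg := fun x => exist P _ (Pn _ (proj2_sig x));
     a_J2 := fun x => exist P _ (PJ _ (proj2_sig x));
     a_zero := exist P _ P0;
     a_one := exist P _ P1 |}.
Lemma subalg_hom : is_hom subalg A (@proj1_sig _ _).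
Proof. repeat split. Qed.
Lemma subalg_inj : injective (X := subalg) (@proj1_sig _ _).
Proof. intros [x px] [y py]; simpl; apply sig_eq. Qed.
End Sub.

Lemma HSP_S K A B e : HSP K B -> is_hom A B e -> injective e -> HSP K A.
Proof.
  intros (I&Bs&C&e0&h&HB&He&Hi&Hh&Hs) He' Hi'.
  pose proof He' as (a1&a2&a3&a4&a5&a6).
  pose proof Hh as (b1&b2&b3&b4&b5&b6).
  set (P := fun p : prod2 C A => h (fst p) = e (snd p)).
  assert (Pm : forall x y, P x -> P y -> P (a_meet x y)).
  { unfold P; intros [] [] ? ?; simpl in *. rewrite a1, b1; congruence. }
  assert (Pj : forall x y, P x -> P y -> P (a_join x y)).
  { unfold P; intros [] [] ? ?; simpl in *. rewrite a2, b2; congruence. }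
  assert (Pn : forall x, P x -> P (a_neg x)).
  { unfold P; intros [] ?; simpl in *. rewrite a3, b3; congruence. }
  assert (PJ : forall x, P x -> P (a_J2 x)).
  { unfold P; intros [] ?; simpl in *. rewrite a4, b4; congruence. }
  assert (P0 : P a_zero) by (unfold P; simpl; congruence).
  assert (P1 : P a_one) by (unfold P; simpl; congruence).
  exists I, Bs, (subalg _ P Pm Pj Pn PJ P0 P1),
    (fun p => e0 (fst (proj1_sig p))), (fun p => snd (proj1_sig p)).
  refine (conj HB (conj _ (conj _ (conj _ _)))).
  - destruct He as (c1&c2&c3&c4&c5&c6).
    repeat split; intros; simpl; rewrite ?c1, ?c2, ?c3, ?c4, ?c5, ?c6; reflexivity.
  - intros [[c a] p] [[c' a'] p'] Heq; simpl in *. apply sig_eq.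
    assert (c = c') by (apply Hi; exact Heq). subst c'.
    unfold P in p, p'; simpl in *.
    assert (a = a') by (apply Hi'; congruence). subst; reflexivity.
  - repeat split.
  - intros a. destruct (Hs (e a)) as [c Hc].
    exists (exist P (c, a) Hc). reflexivity.
Qed.

Record hspd (K : aclass) (A : alg) := {
  hI : Type; hB : hI -> alg; hC : alg; he : hC -> prod_alg hI hB; hh : hC -> A;
  hBK : forall i, K (hB i); hhe : is_hom _ _ he; hinj : injective he;
  hhh : is_hom _ _ hh; hsurj : surjective hh }.

Lemma hsp_ex K A : HSP K A -> exists d : hspd K A, True.
Proof.
  intros (I&Bs&C&e&h&HB&He&Hi&Hh&Hs).
  exists (Build_hspd K A I Bs C e h HB He Hi Hh Hs). trivial.
Qed.

Lemma HSP_P K (J : Type) (A : J -> alg) : (forall j, HSP K (A j)) -> HSP K (prod_alg J A).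
Proof.
  intro H.
  pose (d := fun j => proj1_sig (constructive_indefinite_description _ (hsp_ex _ _ (H j)))).
  exists {j : J & hI _ _ (d j)}, (fun p => hB _ _ (d (projT1 p)) (projT2 p)),
    (prod_alg J (fun j => hC _ _ (d j))),
    (fun c p => he _ _ (d (projT1 p)) (c (projT1 p)) (projT2 p)),
    (fun c j => hh _ _ (d j) (c j)).
  refine (conj _ (conj (conj _ (conj _ (conj _ (conj _ (conj _ _))))) (conj _ (conj (conj _ (conj _ (conj _ (conj _ (conj _ _))))) _)))).
  - intros [j i]; apply hBK.
  - intros x y; apply functional_extensionality_dep; intros [j i]; simpl.
    destruct (hhe _ _ (d j)) as (q&_). rewrite q; reflexivity.
  - intros x y; apply functional_extensionality_dep; intros [j i]; simpl.
    destruct (hhe _ _ (d j)) as (_&q&_). rewrite q; reflexivity.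
  - intros x; apply functional_extensionality_dep; intros [j i]; simpl.
    destruct (hhe _ _ (d j)) as (_&_&q&_). rewrite q; reflexivity.
  - intros x; apply functional_extensionality_dep; intros [j i]; simpl.
    destruct (hhe _ _ (d j)) as (_&_&_&q&_). rewrite q; reflexivity.
  - apply functional_extensionality_dep; intros [j i]; simpl.
    destruct (hhe _ _ (d j)) as (_&_&_&_&q&_). rewrite q; reflexivity.
  - apply functional_extensionality_dep; intros [j i]; simpl.
    destruct (hhe _ _ (d j)) as (_&_&_&_&_&q). rewrite q; reflexivity.
  - intros x y Heq. apply functional_extensionality_dep; intro j.
    apply (hinj _ _ (d j)). apply functional_extensionality_dep; intro i.
    exact (f_equal (fun F => F (existT _ j i)) Heq).
  - intros x y; apply functional_extensionality_dep; intros j; simpl.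
    destruct (hhh _ _ (d j)) as (q&_). rewrite q; reflexivity.
  - intros x y; apply functional_extensionality_dep; intros j; simpl.
    destruct (hhh _ _ (d j)) as (_&q&_). rewrite q; reflexivity.
  - intros x; apply functional_extensionality_dep; intros j; simpl.
    destruct (hhh _ _ (d j)) as (_&_&q&_). rewrite q; reflexivity.
  - intros x; apply functional_extensionality_dep; intros j; simpl.
    destruct (hhh _ _ (d j)) as (_&_&_&q&_). rewrite q; reflexivity.
  - apply functional_extensionality_dep; intros j; simpl.
    destruct (hhh _ _ (d j)) as (_&_&_&_&q&_). rewrite q; reflexivity.
  - apply functional_extensionality_dep; intros j; simpl.
    destruct (hhh _ _ (d j)) as (_&_&_&_&_&q). rewrite q; reflexivity.
  - intro y.
    exists (fun j => proj1_sig (constructive_indefinite_description _ (hsurj _ _ (d j) (y j)))).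
    apply functional_extensionality_dep; intros j; simpl.
    destruct (constructive_indefinite_description _ _); simpl; auto.
Qed.

Definition Sig (A : alg) : Prop :=
  (forall x y : A, a_J2 (a_join x y) = a_join (a_J2 x) (a_J2 y)) /\
  (forall x : A, a_J2 (a_neg x) = a_neg (a_J2 x)).

Definition Char : aclass := fun A => VBCA A /\ Sig A.

Lemma Char_variety : variety Char.
Proof.
  split; [|split].
  - intros A B h Hh Hs [HA [S1 S2]]. split; [eapply HSP_H; eauto|].
    destruct Hh as (c1&c2&c3&c4&c5&c6). split.
    + intros x y. destruct (Hs x) as [a <-]. destruct (Hs y) as [b <-].
      rewrite <- c2, <- c4, S1, c2, !c4; reflexivity.
    + intros x. destruct (Hs x) as [a <-].
      rewrite <- c3, <- c4, S2, c3, c4; reflexivity.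
  - intros A B e He Hi [HB [S1 S2]]. split; [eapply HSP_S; eauto|].
    pose proof He as (c1&c2&c3&c4&c5&c6). split.
    + intros x y. apply Hi. rewrite c4, c2, S1, c2, !c4; reflexivity.
    + intros x. apply Hi. rewrite c4, c3, S2, c3, c4; reflexivity.
  - intros I B HB. split; [apply HSP_P; intro i; apply HB|]. split.
    + intros x y; apply functional_extensionality_dep; intro i; simpl.
      apply (proj1 (proj2 (HB i))).
    + intros x; apply functional_extensionality_dep; intro i; simpl.
      apply (proj2 (proj2 (HB i))).
Qed.

Lemma BA_Char A : BA A -> Char A.
Proof.
  intros [H J]. split; auto. split; intros; rewrite !J; reflexivity.
Qed.

Lemma SL_Char A : SL A -> Char A.
Proof.
  intros [H J]. split; auto. split; intros; rewrite !J.
  - rewrite I16; auto.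
  - rewrite I17; auto. rewrite <- (J a_zero). apply I3; auto.
Qed.

Section Decomp.
Variable B : alg.
Hypothesis HB : VBCA B.
Hypothesis S1 : forall x y : B, a_J2 (a_join x y) = a_join (a_J2 x) (a_J2 y).
Hypothesis S2 : forall x : B, a_J2 (a_neg x) = a_neg (a_J2 x).

Definition P1 (x : B) := a_J2 x = x.
Lemma P1m x y : P1 x -> P1 y -> P1 (a_meet x y).
Proof. unfold P1; intros. rewrite I1; congruence. Qed.
Lemma P1j x y : P1 x -> P1 y -> P1 (a_join x y).
Proof. unfold P1; intros. rewrite S1; congruence. Qed.
Lemma P1n x : P1 x -> P1 (a_neg x).
Proof. unfold P1; intros. rewrite S2; congruence. Qed.
Lemma P1J x : P1 x -> P1 (a_J2 x).
Proof. unfold P1; intros. rewrite I2; congruence. Qed.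
Lemma P10 : P1 a_zero. Proof. apply I3; auto. Qed.
Lemma P11 : P1 a_one. Proof. apply I4; auto. Qed.

Definition B1 := subalg B P1 P1m P1j P1n P1J P10 P11.

Definition P2 (x : B) := a_meet x a_zero = x.
Lemma P2m x y : P2 x -> P2 y -> P2 (a_meet x y).
Proof. unfold P2; intros. rewrite I5; congruence. Qed.
Lemma P2j x y : P2 x -> P2 y -> P2 (a_join x y).
Proof. unfold P2; intros. rewrite I6; congruence. Qed.
Lemma P2z x : P2 (a_meet x a_zero).
Proof. unfold P2; apply I7; auto. Qed.
Lemma P20 : P2 a_zero. Proof. apply I8; auto. Qed.

Definition B2 : alg :=
  {| car := {x : B | P2 x};
     a_meet := fun x y => exist P2 _ (P2m _ _ (proj2_sig x) (proj2_sig y));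
     a_join := fun x y => exist P2 _ (P2j _ _ (proj2_sig x) (proj2_sig y));
     a_neg := fun x => exist P2 _ (P2z (a_neg (proj1_sig x)));
     a_J2 := fun x => exist P2 _ P20;
     a_zero := exist P2 _ P20;
     a_one := exist P2 _ P20 |}.

Definition pi2 (x : B) : B2 := exist P2 _ (P2z x).

Lemma pi2_hom : is_hom B B2 pi2.
Proof.
  unfold pi2; repeat split; intros; apply sig_eq; simpl.
  - apply I5; auto.
  - apply I6; auto.
  - apply I9; auto.
  - apply I10; auto.
  - apply I8; auto.
  - apply I11; auto.
Qed.

Lemma pi2_surj : surjective pi2.
Proof. intros [q Hq]. exists q. apply sig_eq. exact Hq. Qed.

Lemma B1_BA : BA B1.
Proof.
  split.
  - eapply HSP_S; [exact HB | apply subalg_hom | apply subalg_inj].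
  - intros [x px]. apply sig_eq. exact px.
Qed.

Lemma B2_SL : SL B2.
Proof.
  split.
  - eapply HSP_H; [exact HB | apply pi2_hom | apply pi2_surj].
  - intros; reflexivity.
Qed.

Definition phi (x : B) : prod2 B1 B2 := (exist P1 _ (I2 B HB x), pi2 x).

Lemma phi_iso : iso B (prod2 B1 B2).
Proof.
  exists phi. destruct pi2_hom as (c1&c2&c3&c4&c5&c6).
  split; [|split].
  - unfold phi; repeat split; intros; simpl; f_equal; try apply sig_eq;
      auto using I1, I3, I4, I2, I5, I6, I9, I10, I8, I11.
  - intros x y Heq. injection Heq; intros E2 E1.
    rewrite (I12 B HB x), (I12 B HB y). f_equal; assumption.
  - intros [[p Hp] [q Hq]]. exists (a_join q p). unfold phi; f_equal; apply sig_eq.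
    + rewrite S1. unfold P1, P2 in *. rewrite Hp.
      assert (E : a_J2 q = a_zero) by (rewrite <- Hq; apply I13; auto).
      rewrite E. apply I14; auto.
    + unfold P1, P2 in *. rewrite I6, Hq, <- Hp, I10, I15; auto.
Qed.
End Decomp.

Lemma Char_prod A : Char A -> prod_class BA SL A.
Proof.
  intros [H [S1 S2]]. exists (B1 A H S1 S2), (B2 A H).
  split; [apply B1_BA|split; [apply B2_SL| apply phi_iso]].
Qed.

Theorem corollary4p11 :
  forall A : alg, subvar_join BA SL A <-> prod_class BA SL A.
Proof.
  intros A; split.
  - intro H. apply Char_prod. apply H.
    + apply Char_variety.
    + intros B [HB _]; exact HB.
    + apply BA_Char.
    + apply SL_Char.
  - intros (A1&A2&H1&H2&[f [Hf [Hi _]]]) K [_ [HS HP]] _ KBA KSL.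
    apply (HS A _ f Hf Hi).
    pose (F := fun b : bool => if b then A1 else A2).
    apply (HS _ (prod_alg bool F)
      (fun (p : prod2 A1 A2) (b : bool) => match b as b' return car (F b') with true => fst p | false => snd p end)).
    + repeat split; intros; apply functional_extensionality_dep; intros []; reflexivity.
    + intros [x1 x2] [y1 y2] E.
      pose proof (f_equal (fun g => g true) E) as E1.
      pose proof (f_equal (fun g => g false) E) as E2. simpl in *. subst; reflexivity.
    + apply HP. intros []; simpl; auto.
Qed.
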